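(* Let $q\in k^\times$ with $q\neq1$, and let $\tau_q\colon k[y]\otimes k[x]\to k[x]\otimes k[y]$ be the twisting map \[\tau_q(y^m\otimes f)=\sum_{i=0}^m \genfrac{[}{]}{0pt}{0}{m}{i}_q\,\theta^i\partial_q^{m-i}(f)\otimes y^i,\] so that $k[x]\otimes_{\tau_q}k[y]$ is the quantized Weyl algebra $A_1^q(k)=k\langle x,y\mid yx-qxy=1\rangle$. Then $\tau_q$ is continuous as a map $k[y]\otimes^!k[x]\to k[x]\otimes^!k[y]$ (for the cofinite topologies on $k[x]$ and $k[y]$) if and only if $q$ is a root of unity.
   Context: $k$ is a field with the discrete topology. $\theta$ is the automorphism $f(x)\mapsto f(qx)$ of $k[x]$ and $\partial_q$ is the $q$-derivative, $\partial_q x^n=[n]_q x^{n-1}$ with $[n]_q=1+q+\dots+q^{n-1}$. The $q$-binomial coefficient $\genfrac{[}{]}{0pt}{0}{m}{i}_q$ is obtained by evaluating at $t=q$ the integer polynomial $[m]_t!/([i]_t![m-i]_t!)$, where $[n]_t!=[n]_t[n-1]_t\cdots[1]_t$. For an algebra $R$, the cofinite topology is the linear topology whose open subspaces are those containing a two-sided ideal of finite codimension. For linearly topologized spaces $E,F$, $E\otimes^!F$ is $E\otimes F$ with the linear topology whose open subspaces contain $E_0\otimes F+E\otimes F_0$ for some open subspaces $E_0\subseteq E$, $F_0\subseteq F$. $k[x]\otimes_\tau k[y]$ is $k[x]\otimes k[y]$ with multiplication $(m\otimes m)\circ(\mathrm{id}\otimes\tau\otimes\mathrm{id})$. *)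

(* Defs.v *)
From HB Require Import structures.
From mathcomp Require Import all_boot all_order all_algebra.
Set Implicit Arguments. Unset Strict Implicit. Unset Printing Implicit Defensive.
Import Order.TTheory GRing.Theory Num.Theory.
Local Open Scope ring_scope.

Section Defs.
Variable k : fieldType.

Definition qint_poly (n : nat) : {poly int} := \sum_(l < n) 'X^l.
Definition qfact_poly (n : nat) : {poly int} := \prod_(j < n) qint_poly j.+1.
Definition qbinom_poly (m i : nat) : {poly int} :=
  qfact_poly m %/ (qfact_poly i * qfact_poly (m - i)).
Definition qbinom (q : k) (m i : nat) : k :=
  (map_poly (fun z : int => z%:~R) (qbinom_poly m i)).[q].

Definition qint (q : k) (n : nat) : k := \sum_(l < n) q ^+ l.

Definition theta (q : k) (f : {poly k}) : {poly k} :=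
  \poly_(i < size f) (q ^+ i * f`_i).
Definition dq (q : k) (f : {poly k}) : {poly k} :=
  \poly_(i < (size f).-1) (qint q i.+1 * f`_i.+1).

(* An element P : {poly {poly k}} of A (x) B (A = k[u], B = k[v]) represents
   sum_i sum_j P`_i`_j u^i (x) v^j ; equivalently sum_i u^i (x) P`_i. *)
Definition tens (a b : {poly k}) : {poly {poly k}} :=
  \poly_(i < size a) (a`_i *: b).

Definition tauq (q : k) (P : {poly {poly k}}) : {poly {poly k}} :=
  \sum_(m < size P) \sum_(i < m.+1)
     tens (qbinom q m i *: iter i (theta q) (iter (m - i) (dq q) P`_m)) 'X^i.

Definition subspace (V : {poly k} -> Prop) : Prop :=
  V 0 /\ (forall a b, V a -> V b -> V (a + b)) /\ (forall c a, V a -> V (c *: a)).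

Definition subspace2 (V : {poly {poly k}} -> Prop) : Prop :=
  V 0 /\ (forall a b, V a -> V b -> V (a + b)) /\
  (forall (c : k) a, V a -> V (c%:P *: a)).

Definition is_ideal (I : {poly k} -> Prop) : Prop :=
  I 0 /\ (forall a b, I a -> I b -> I (a + b)) /\
  (forall a b, I b -> I (a * b)) /\ (forall a b, I a -> I (a * b)).

Definition fin_codim (I : {poly k} -> Prop) : Prop :=
  exists s : seq {poly k}, forall p, exists c : nat -> k,
    I (p - \sum_(i < size s) c i *: s`_i).

Definition cofinite_open (E0 : {poly k} -> Prop) : Prop :=
  subspace E0 /\ exists I, [/\ is_ideal I, fin_codim I & forall p, I p -> E0 p].

Definition tens_sum (E0 F0 : {poly k} -> Prop) (P : {poly {poly k}}) : Prop :=
  exists (s t : seq ({poly k} * {poly k})),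
    [/\ forall e, e \in s -> E0 e.1,
        forall e, e \in t -> F0 e.2 &
        P = \sum_(e <- s) tens e.1 e.2 + \sum_(e <- t) tens e.1 e.2].

(* open subspaces of A (x)^! B, A and B with the cofinite topology *)
Definition tens_open (V : {poly {poly k}} -> Prop) : Prop :=
  subspace2 V /\ exists E0 F0, [/\ cofinite_open E0, cofinite_open F0 &
                                  forall P, tens_sum E0 F0 P -> V P].

Definition tens_continuous (f : {poly {poly k}} -> {poly {poly k}}) : Prop :=
  forall V, tens_open V -> tens_open (fun P => V (f P)).

Definition q_root_of_unity (q : k) : Prop := exists n : nat, (0 < n)%N /\ q ^+ n = 1.

End Defs.

(* Main.v *)
Require Import Defs.
From HB Require Import structures.
From mathcomp Require Import all_boot all_order all_algebra.
From mathcomp Require Import ring zify.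
Import GRing.Theory.
Local Open Scope ring_scope.

Lemma qint_polyD a b : qint_poly (a + b) = qint_poly a + 'X^a * qint_poly b.
Proof.
rewrite /qint_poly big_split_ord /=; congr (_ + _).
by rewrite big_distrr; apply: eq_bigr => i _; rewrite exprD.
Qed.

Lemma qint_polyE n : qint_poly n = \poly_(i < n) 1.
Proof. by rewrite poly_def /qint_poly; apply: eq_bigr => i _; rewrite scale1r. Qed.

Lemma qint_poly_monic n : qint_poly n.+1 \is monic.
Proof. by rewrite monicE qint_polyE lead_coef_poly // oner_neq0. Qed.

Lemma qfactS m : qfact_poly m.+1 = qfact_poly m * qint_poly m.+1.
Proof. by rewrite /qfact_poly big_ord_recr. Qed.

Lemma qfact0 : qfact_poly 0 = 1.
Proof. by rewrite /qfact_poly big_ord0. Qed.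

Lemma qfact_monic m : qfact_poly m \is monic.
Proof. by apply: monic_prod => i _; apply: qint_poly_monic. Qed.

Lemma qbinom_poly_def m i (B : {poly int}) :
  B * (qfact_poly i * qfact_poly (m - i)) = qfact_poly m -> qbinom_poly m i = B.
Proof.
move=> E; rewrite /qbinom_poly -E Pdiv.IdomainMonic.mulpK //.
by rewrite monicMr ?qfact_monic.
Qed.

Lemma qbinom_poly_m0 m : qbinom_poly m 0 = 1.
Proof. by apply: qbinom_poly_def; rewrite qfact0 subn0 !mul1r. Qed.

Lemma qbinom_poly_mm m : qbinom_poly m m = 1.
Proof. by apply: qbinom_poly_def; rewrite subnn qfact0 !mulr1 mul1r. Qed.

Lemma qbinom_cand m i : (i < m)%N ->
  qbinom_poly m i * (qfact_poly i * qfact_poly (m - i)) = qfact_poly m ->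
  qbinom_poly m i.+1 * (qfact_poly i.+1 * qfact_poly (m - i.+1)) = qfact_poly m ->
  ((qbinom_poly m i + 'X^(i.+1) * qbinom_poly m i.+1) *
     (qfact_poly i.+1 * qfact_poly (m.+1 - i.+1)))%R = qfact_poly m.+1.
Proof.
move=> lim e1 e2.
have hm : (m - i = (m - i.+1).+1)%N by rewrite subnSK.
have hm1 : (m.+1 = i.+1 + (m - i))%N by rewrite addSn subnKC // ltnW.
rewrite [in RHS]qfactS [in X in qint_poly X]hm1 qint_polyD subSS hm.
move: e1 e2; rewrite hm !qfactS => e1 e2.
rewrite ?qfactS.
set b0 := qbinom_poly m i in e1 *; set b1 := qbinom_poly m i.+1 in e2 *.
set A := qfact_poly i in e1 e2 *; set C := qfact_poly (m - i.+1) in e1 e2 *.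
set u := qint_poly i.+1 in e2 *; set w := qint_poly (m - i.+1).+1 in e1 *.
set F := qfact_poly m in e1 e2 *.
transitivity (b0 * (A * (C * w)) * u + 'X^(i.+1) * (b1 * (A * u * C)) * w); first by ring.
idtac.
rewrite e1 e2; ring.
Qed.

Lemma qbinom_poly_prod m i : (i <= m)%N ->
  qbinom_poly m i * (qfact_poly i * qfact_poly (m - i)) = qfact_poly m.
Proof.
elim: m i => [|m IH] [|i] //.
- by move=> _; rewrite qbinom_poly_m0 qfact0 !mul1r.
- by move=> _; rewrite qbinom_poly_m0 qfact0 subn0 !mul1r.
rewrite ltnS leq_eqVlt => /orP[/eqP->|lim].
  by rewrite qbinom_poly_mm subnn qfact0 mulr1 mul1r.
have e1 := IH i (ltnW lim); have e2 := IH i.+1 lim.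
by rewrite (qbinom_poly_def _ _ _ (qbinom_cand _ _ lim e1 e2)) qbinom_cand.
Qed.

Lemma qbinom_polyS m i : (i < m)%N ->
  qbinom_poly m.+1 i.+1 = qbinom_poly m i + 'X^(i.+1) * qbinom_poly m i.+1.
Proof.
move=> lim; apply: qbinom_poly_def; apply: qbinom_cand => //.
  exact/qbinom_poly_prod/ltnW.
exact/qbinom_poly_prod.
Qed.

Section Q.
Variable k : fieldType.
Variable q : k.

Definition ev (p : {poly int}) : k := (map_poly (fun z : int => z%:~R) p).[q].
Lemma evM p p' : ev (p * p') = ev p * ev p'.
Proof. by rewrite /ev rmorphM hornerM. Qed.
Lemma evD p p' : ev (p + p') = ev p + ev p'.
Proof. by rewrite /ev rmorphD hornerD. Qed.
Lemma evXn n : ev 'X^n = q ^+ n.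
Proof. by rewrite /ev map_polyXn hornerXn. Qed.
Lemma ev1 : ev 1 = 1.
Proof. by rewrite /ev rmorph1 hornerC. Qed.
Lemma ev_sum n (F : 'I_n -> {poly int}) : ev (\sum_(i < n) F i) = \sum_(i < n) ev (F i).
Proof. by rewrite /ev rmorph_sum horner_sum. Qed.
Lemma ev_prod n (F : 'I_n -> {poly int}) : ev (\prod_(i < n) F i) = \prod_(i < n) ev (F i).
Proof. by rewrite /ev rmorph_prod horner_prod. Qed.

Definition qfk m := \prod_(j < m) qint q j.+1.

Lemma qint_ev n : ev (qint_poly n) = qint q n.
Proof. by rewrite /qint_poly ev_sum; apply: eq_bigr => i _; rewrite evXn. Qed.

Lemma qfk_ev m : ev (qfact_poly m) = qfk m.
Proof. by rewrite /qfact_poly ev_prod; apply: eq_bigr => i _; rewrite qint_ev. Qed.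

Lemma qbinom_m0 m : qbinom q m 0 = 1.
Proof. by rewrite /qbinom qbinom_poly_m0 -/(ev 1) ev1. Qed.

Lemma qbinom_mm m : qbinom q m m = 1.
Proof. by rewrite /qbinom qbinom_poly_mm -/(ev 1) ev1. Qed.

Lemma qbinomS m i : (i < m)%N ->
  qbinom q m.+1 i.+1 = qbinom q m i + q ^+ i.+1 * qbinom q m i.+1.
Proof.
move=> lim; rewrite /qbinom (qbinom_polyS _ _ lim).
by rewrite -!/(ev _) evD evM evXn.
Qed.

Lemma qbinom_prod m i : (i <= m)%N ->
  qbinom q m i * (qfk i * qfk (m - i)) = qfk m.
Proof.
move=> lim; rewrite -!qfk_ev -(qbinom_poly_prod _ _ lim) !evM.
by [].
Qed.

Lemma qintD a b : qint q (a + b) = qint q a + q ^+ a * qint q b.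
Proof. by rewrite -!qint_ev qint_polyD evD evM evXn. Qed.

Lemma qint_eq0 n : q != 1 -> q ^+ n = 1 -> qint q n = 0.
Proof.
move=> hq1 hn; have := subrX1 q n; rewrite hn subrr => /esym/eqP.
by rewrite mulf_eq0 subr_eq0 (negbTE hq1) /= => /eqP.
Qed.

Lemma qint_neq0 n : q ^+ n != 1 -> qint q n != 0.
Proof.
move=> hn; apply/eqP => h; move/eqP: hn; apply; have := subrX1 q n.
by rewrite /qint in h; rewrite h mulr0 => /eqP; rewrite subr_eq0 => /eqP.
Qed.

End Q.
Arguments qfk {k} q m.
Arguments ev {k} q p.

Section Ops.
Variable k : fieldType.
Variable q : k.

Definition ff j n := \prod_(l < n) qint q (j + l).+1.

Lemma ffS j n : ff j n.+1 = qint q j.+1 * ff j.+1 n.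
Proof.
rewrite /ff big_ord_recl addn0; congr (_ * _); apply: eq_bigr => l _.
by rewrite /= addSnnS.
Qed.

Lemma ff0 j : ff j 0 = 1.
Proof. by rewrite /ff big_ord0. Qed.

Lemma coef_theta f i : (theta q f)`_i = q ^+ i * f`_i.
Proof.
rewrite /theta coef_poly; case: ltnP => // h.
by rewrite nth_default ?mulr0.
Qed.

Lemma coef_dq f i : (dq q f)`_i = qint q i.+1 * f`_i.+1.
Proof.
rewrite /dq coef_poly; case: ltnP => // h.
rewrite nth_default ?mulr0 //; move: h; case: (size f) => [|s] //=.
Qed.

Lemma coef_iter_theta j f i : (iter j (theta q) f)`_i = (q ^+ i) ^+ j * f`_i.
Proof.
elim: j => [|j IH]; first by rewrite expr0 mul1r.
by rewrite iterS coef_theta IH exprS mulrA.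
Qed.

Lemma coef_iter_dq j f i : (iter j (dq q) f)`_i = ff i j * f`_(i + j).
Proof.
elim: j i => [|j IH] i; first by rewrite ff0 mul1r addn0.
rewrite iterS coef_dq IH ffS mulrA addnS.
by rewrite addSn.
Qed.

Definition linp (F : {poly k} -> {poly k}) :=
  forall (c : k) a b, F (c *: a + b) = c *: F a + F b.

Lemma linp0 F : linp F -> F 0 = 0.
Proof.
move=> h; have := h 1 0 0; rewrite !scale1r addr0 -{1}[F 0]addr0.
by move/addrI.
Qed.
Lemma linpD F : linp F -> forall a b, F (a + b) = F a + F b.
Proof. by move=> h a b; have := h 1 a b; rewrite !scale1r. Qed.
Lemma linpZ F : linp F -> forall c a, F (c *: a) = c *: F a.
Proof. by move=> h c a; have := h c a 0; rewrite addr0 (linp0 _ h) addr0. Qed.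

Lemma linp_iter F j : linp F -> linp (iter j F).
Proof.
move=> h; elim: j => [|j IH] c a b //=.
by rewrite IH h.
Qed.

Lemma theta_lin : linp (theta q).
Proof.
move=> c a b; apply/polyP => i.
by rewrite !(coefD, coefZ, coef_theta); ring.
Qed.

Lemma dq_lin : linp (dq q).
Proof.
move=> c a b; apply/polyP => i.
by rewrite !(coefD, coefZ, coef_dq); ring.
Qed.

Lemma coef_tens (a b : {poly k}) i : (tens a b)`_i = a`_i *: b.
Proof.
rewrite /tens coef_poly; case: ltnP => // h.
by rewrite nth_default ?scale0r.
Qed.

Lemma tens_lin (c : k) (a a' b : {poly k}) : tens (c *: a + a') b = c%:P *: tens a b + tens a' b.
Proof.
apply/polyP => i; rewrite !(coefD, coefZ, coef_tens).
by rewrite mul_polyC scalerDl scalerA.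
Qed.

Lemma tens0 (b : {poly k}) : tens 0 b = 0.
Proof. by apply/polyP => i; rewrite coef_tens !coef0 scale0r. Qed.

Lemma coef2_tens (a b : {poly k}) i j : (tens a b)`_i`_j = a`_i * b`_j.
Proof. by rewrite coef_tens coefZ. Qed.

Definition Tm m f := \sum_(i < m.+1)
   tens (qbinom q m i *: iter i (theta q) (iter (m - i) (dq q) f)) 'X^i.

Lemma tauqE P : tauq q P = \sum_(m < size P) Tm m P`_m.
Proof. by []. Qed.

Lemma Tm_lin m c f g : Tm m (c *: f + g) = c%:P *: Tm m f + Tm m g.
Proof.
rewrite /Tm scaler_sumr -big_split /=; apply: eq_bigr => i _.
rewrite (linp_iter _ _ dq_lin) (linp_iter _ _ theta_lin) scalerDr scalerA mulrC -scalerA.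
by rewrite tens_lin.
Qed.

Lemma Tm0 m : Tm m 0 = 0.
Proof.
have := Tm_lin m 1 0 0; rewrite !scale1r addr0 -{1}[Tm m 0]addr0.
by move/addrI.
Qed.

Lemma tauq_bound N (P : {poly {poly k}}) : (size P <= N)%N -> tauq q P = \sum_(m < N) Tm m P`_m.
Proof.
move=> h; rewrite tauqE (big_ord_widen _ (fun m => Tm m P`_m) h) big_mkcond /=.
apply: eq_bigr => i _; case: ifP => // h'.
by rewrite nth_default ?Tm0 // leqNgt h'.
Qed.

Lemma tauq_lin (c : k) (P P' : {poly {poly k}}) : tauq q (c%:P *: P + P') = c%:P *: tauq q P + tauq q P'.
Proof.
set N := maxn (size P) (size P').
have h1 : (size P <= N)%N by apply: leq_maxl.
have h2 : (size P' <= N)%N by apply: leq_maxr.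
have h3 : (size (c%:P *: P + P')%R <= N)%N.
  apply: leq_trans (size_add _ _) _; rewrite geq_max h2 andbT.
  exact: leq_trans (size_scale_leq _ _) h1.
rewrite (tauq_bound _ _ h1) (tauq_bound _ _ h2) (tauq_bound _ _ h3) scaler_sumr -big_split /=.
apply: eq_bigr => m _; rewrite coefD coefZ mul_polyC.
by rewrite Tm_lin.
Qed.

Lemma tauq0 : tauq q 0 = 0.
Proof. by rewrite tauqE size_poly0 big_ord0. Qed.

Lemma tauqD (P P' : {poly {poly k}}) : tauq q (P + P') = tauq q P + tauq q P'.
Proof. by have := tauq_lin 1 P P'; rewrite !scale1r. Qed.

Lemma tauqZ (c : k) (P : {poly {poly k}}) : tauq q (c%:P *: P) = c%:P *: tauq q P.
Proof. by have := tauq_lin c P 0; rewrite !addr0 tauq0 addr0. Qed.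

Lemma tauq_sum (T : Type) (s : seq T) (F : T -> {poly {poly k}}) :
  tauq q (\sum_(e <- s) F e) = \sum_(e <- s) tauq q (F e).
Proof.
elim: s => [|x s IH]; first by rewrite !big_nil tauq0.
by rewrite !big_cons tauqD IH.
Qed.

Lemma sum_delta (n i : nat) (F : nat -> k) :
  \sum_(j < n) F j * (i == j)%:R = if (i < n)%N then F i else 0.
Proof.
transitivity (\sum_(j < n | j == i :> nat) F j); last by rewrite big_ord1_eq.
rewrite [RHS]big_mkcond /=; apply: eq_bigr => j _.
by rewrite eq_sym; case: eqP => _; rewrite ?mulr1 ?mulr0.
Qed.

Lemma sum_deltaP (n i : nat) (F : nat -> {poly k}) :
  \sum_(j < n) (i == j)%:R *: F j = if (i < n)%N then F i else 0.
Proof.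
transitivity (\sum_(j < n | j == i :> nat) F j); last by rewrite big_ord1_eq.
rewrite [RHS]big_mkcond /=; apply: eq_bigr => j _.
by rewrite eq_sym; case: eqP => _; rewrite ?scale1r ?scale0r.
Qed.

Lemma coef_Tm m f j i : (Tm m f)`_j`_i =
  if (i <= m)%N then qbinom q m i * ((q ^+ j) ^+ i * (ff j (m - i) * f`_(j + (m - i))))
  else 0.
Proof.
rewrite /Tm !coef_sum.
under eq_bigr => i' _ do rewrite coef2_tens coefZ coef_iter_theta coef_iter_dq coefXn.
rewrite (sum_delta m.+1 i (fun i' => qbinom q m i' *
   ((q ^+ j) ^+ i' * (ff j (m - i') * f`_(j + (m - i')))))).
by [].
Qed.

End Ops.
Arguments ff {k} q j n.
Arguments Tm {k} q m f.
Arguments linp {k} F.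

Section Lop.
Variable k : fieldType.
Variable q : k.

Definition Lop (R : {poly {poly k}}) : {poly {poly k}} :=
  \poly_(j < size R) (q ^+ j *: ('X * R`_j) + qint q j.+1 *: R`_j.+1).

Lemma coef_Lop R j : (Lop R)`_j = q ^+ j *: ('X * R`_j) + qint q j.+1 *: R`_j.+1.
Proof.
rewrite /Lop coef_poly; case: ltnP => // h.
by rewrite !nth_default ?mulr0 ?scaler0 ?addr0 // (leq_trans h).
Qed.

Lemma coef2_Lop R j i : (Lop R)`_j`_i =
  q ^+ j * (if i == 0%N then 0 else R`_j`_i.-1) + qint q j.+1 * R`_j.+1`_i.
Proof. by rewrite coef_Lop coefD !coefZ coefXM. Qed.

Lemma Tm_S m f : Tm q m.+1 f = Lop (Tm q m f).
Proof.
apply/polyP => j; apply/polyP => i.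
rewrite coef2_Lop !coef_Tm.
case: i => [|i] /=.
  rewrite !qbinom_m0 !expr0 !subn0 ffS !mul1r mulr0 add0r.
  by rewrite -addSnnS mulrA.
rewrite ltnS; case: (ltngtP i m) => him.
- have hm : (m - i = (m - i.+1).+1)%N by rewrite subnSK.
  rewrite subSS hm ffS (qbinomS _ _ _ _ him) addSnnS.
  rewrite -addSnnS [q ^+ j.+1]exprS exprMn [q ^+ j ^+ i.+1]exprS.
  ring.
- by rewrite !mulr0 addr0.
- subst i; rewrite subnn !qbinom_mm !ff0 !addn0 mulr0 addr0.
  by rewrite subnn ff0 addn0 !mul1r exprS mulrA.
Qed.



Lemma coef2Z (c : k) (R : {poly {poly k}}) j i : (c%:P *: R)`_j`_i = c * R`_j`_i.
Proof. by rewrite coefZ mul_polyC coefZ. Qed.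

Lemma coef2D (R R' : {poly {poly k}}) j i : (R + R')`_j`_i = R`_j`_i + R'`_j`_i.
Proof. by rewrite !coefD. Qed.

Lemma Lop_lin (c : k) R R' : Lop (c%:P *: R + R') = c%:P *: Lop R + Lop R'.
Proof.
apply/polyP => j; apply/polyP => i.
rewrite !(coef2D, coef2Z, coef2_Lop); case: i => [|i] /=; ring.
Qed.

Lemma Lop0 : Lop 0 = 0.
Proof. by rewrite /Lop size_poly0 poly_def big_ord0. Qed.

Lemma LopD R R' : Lop (R + R') = Lop R + Lop R'.
Proof. by have := Lop_lin 1 R R'; rewrite !scale1r. Qed.

Lemma LopZ (c : k) R : Lop (c%:P *: R) = c%:P *: Lop R.
Proof. by have := Lop_lin c R 0; rewrite !addr0 Lop0 addr0. Qed.

Lemma iterLopD n R R' : iter n Lop (R + R') = iter n Lop R + iter n Lop R'.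
Proof. by elim: n => //= n ->; rewrite LopD. Qed.

Lemma iterLopZ n (c : k) R : iter n Lop (c%:P *: R) = c%:P *: iter n Lop R.
Proof. by elim: n => //= n ->; rewrite LopZ. Qed.

Lemma iterLop0 n : iter n Lop 0 = 0.
Proof. by elim: n => //= n ->; rewrite Lop0. Qed.

Lemma Tm_iter m f : Tm q m f = iter m Lop (tens f 1).
Proof.
elim: m => [|m IH]; last by rewrite Tm_S IH.
by rewrite /Tm big_ord1 qbinom_mm scale1r expr0.
Qed.

Definition My (H : {poly k}) (R : {poly {poly k}}) : {poly {poly k}} :=
  map_poly (fun p => p * H) R.

Lemma coef_My H R j : (My H R)`_j = R`_j * H.
Proof. by rewrite /My coef_map_id0 // mul0r. Qed.

Lemma Lop_My H R : Lop (My H R) = My H (Lop R).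
Proof.
apply/polyP => j; rewrite coef_Lop !coef_My coef_Lop.
by rewrite mulrDl -!scalerAl mulrA.
Qed.

Lemma iterLop_My n H R : iter n Lop (My H R) = My H (iter n Lop R).
Proof. by elim: n => //= n ->; rewrite Lop_My. Qed.

Lemma My_My a b R : My a (My b R) = My (b * a) R.
Proof. by apply/polyP => j; rewrite !coef_My mulrA. Qed.

Lemma My_lin H (c : k) R R' : My H (c%:P *: R + R') = c%:P *: My H R + My H R'.
Proof.
apply/polyP => j; rewrite !(coefD, coef_My, coefZ) mulrDl.
by rewrite !mul_polyC scalerAl.
Qed.

Lemma My_linH (c : k) H H' R : My (c *: H + H') R = c%:P *: My H R + My H' R.
Proof.
apply/polyP => j; rewrite !(coefD, coef_My, coefZ) mulrDr.
by rewrite !mul_polyC scalerAr.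
Qed.

Lemma My_sumH n (F : 'I_n -> {poly k}) R :
  My (\sum_(i < n) F i) R = \sum_(i < n) My (F i) R.
Proof.
apply/polyP => j; rewrite coef_My !coef_sum mulr_sumr.
by apply: eq_bigr => i _; rewrite coef_My.
Qed.

Lemma My0 H : My H 0 = 0.
Proof. by rewrite /My map_poly0. Qed.

Lemma My1 R : My 1 R = R.
Proof. by apply/polyP => j; rewrite coef_My mulr1. Qed.

Lemma My_tens b n : My 'X^n (tens b 1) = tens b 'X^n.
Proof. by apply/polyP => j; rewrite coef_My !coef_tens -scalerAl mul1r. Qed.

Definition Lp (a : {poly k}) (T : {poly {poly k}}) :=
  \sum_(m < size a) (a`_m)%:P *: iter m Lop T.

Lemma Lp_bound N (a : {poly k}) T : (size a <= N)%N -> Lp a T = \sum_(m < N) (a`_m)%:P *: iter m Lop T.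
Proof.
move=> h; rewrite /Lp (big_ord_widen _ (fun m => (a`_m)%:P *: iter m Lop T) h) big_mkcond /=.
apply: eq_bigr => i _; case: ifP => // h'.
by rewrite nth_default ?polyC0 ?scale0r // leqNgt h'.
Qed.

Lemma Lp_lin (c : k) (a a' : {poly k}) T : Lp (c *: a + a') T = c%:P *: Lp a T + Lp a' T.
Proof.
set N := maxn (size a) (size a').
have h1 : (size a <= N)%N by apply: leq_maxl.
have h2 : (size a' <= N)%N by apply: leq_maxr.
have h3 : (size (c *: a + a')%R <= N)%N.
  apply: leq_trans (size_add _ _) _; rewrite geq_max h2 andbT.
  exact: leq_trans (size_scale_leq _ _) h1.
rewrite (Lp_bound _ _ _ h1) (Lp_bound _ _ _ h2) (Lp_bound _ _ _ h3) scaler_sumr -big_split /=.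
apply: eq_bigr => m _; rewrite coefD coefZ polyCD polyCM scalerDl scalerA.
by [].
Qed.

Lemma Lp0 T : Lp 0 T = 0.
Proof. by rewrite /Lp size_poly0 big_ord0. Qed.

Lemma LpD (a a' : {poly k}) T : Lp (a + a') T = Lp a T + Lp a' T.
Proof. by have := Lp_lin 1 a a' T; rewrite !scale1r. Qed.

Lemma LpZ (c : k) (a : {poly k}) T : Lp (c *: a) T = c%:P *: Lp a T.
Proof. by have := Lp_lin c a 0 T; rewrite !addr0 Lp0 addr0. Qed.

Lemma LpC (c : k) T : Lp c%:P T = c%:P *: T.
Proof.
rewrite (Lp_bound 1 _ _ (size_polyC_leq1 c)) big_ord1 /=.
by rewrite coefC.
Qed.

Lemma Lp_mulX (p : {poly k}) T : Lp (p * 'X) T = Lp p (Lop T).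
Proof.
have h : (size (p * 'X)%R <= (size p).+1)%N.
  by apply: leq_trans (size_mul_leq _ _) _; rewrite size_polyX addn2.
rewrite (Lp_bound _ _ _ h) big_ord_recl coefMX eqxx polyC0 scale0r add0r.
by apply: eq_bigr => m _; rewrite coefMX /= add0n -iterS iterSr.
Qed.

Lemma Lp_tauq (a b : {poly k}) : tauq q (tens a b) = Lp a (tens b 1).
Proof.
rewrite (tauq_bound _ q (size a)); last by apply: size_poly.
apply: eq_bigr => m _; rewrite coef_tens -[_ *: b]addr0 Tm_lin Tm0 addr0.
by rewrite Tm_iter.
Qed.

End Lop.
Arguments Lop {k} q R.
Arguments My {k} H R.
Arguments Lp {k} q a T.

Section Root.
Variable k : fieldType.
Variable q : k.
Hypothesis hq1 : q != 1.
Variable n : nat.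
Hypothesis hn0 : (0 < n)%N.
Hypothesis hnq : q ^+ n = 1.
Hypothesis hmin : forall l, (0 < l < n)%N -> q ^+ l != 1.

Lemma qint_mult t : qint q (n * t) = 0.
Proof. by apply: qint_eq0 => //; rewrite exprM hnq expr1n. Qed.

Lemma dq_n_zero f : iter n (dq q) f = 0.
Proof.
apply/polyP => j; rewrite coef_iter_dq coef0.
have hl : (n.-1 - j %% n < n)%N by lia.
rewrite /ff (bigD1 (Ordinal hl)) //= .
have -> : ((j + (n.-1 - j %% n)).+1 = n * (j %/ n).+1)%N.
  have := divn_eq j n; have := ltn_mod j n; rewrite hn0.
  set a := (j %/ n)%N; set b := (j %% n)%N => hb hj.
  rewrite {1}hj; nia.
by rewrite qint_mult !mul0r.
Qed.

Lemma qfk_neq0 i : (i < n)%N -> qfk q i != 0.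
Proof.
move=> hi; apply/prodf_neq0 => j _; apply: qint_neq0; apply: hmin.
by apply/andP; split => //; apply: leq_ltn_trans hi.
Qed.

Lemma qbinom_n_zero i : (0 < i < n)%N -> qbinom q n i = 0.
Proof.
case/andP=> hi0 hin.
have := @qbinom_prod _ q _ _ (ltnW hin).
have -> : qfk q n = 0.
  move: hn0 hnq; case: n => // n' _ hq.
  by rewrite /qfk big_ord_recr /= qint_eq0 // mulr0.
have h2 : (n - i < n)%N by lia.
move/eqP; rewrite mulf_eq0 mulf_eq0 (negbTE (qfk_neq0 _ hin)) /=.
by rewrite (negbTE (qfk_neq0 _ h2)) orbF => /eqP.
Qed.

Lemma theta_n f : iter n (theta q) f = f.
Proof.
by apply/polyP => i; rewrite coef_iter_theta exprAC hnq expr1n mul1r.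
Qed.

Lemma Tm_n b : Tm q n b = tens b 'X^n.
Proof.
rewrite /Tm big_ord_recr /= qbinom_mm subnn /= theta_n scale1r big1 ?add0r //.
move=> [i hi] _ /=; case: i hi => [|i] hi.
  by rewrite subn0 dq_n_zero (linp0 _ _ (linp_iter _ _ _ (theta_lin _ q))) scaler0 tens0.
by rewrite qbinom_n_zero ?scale0r ?tens0 //; apply/andP.
Qed.

Lemma Lop_n b : iter n (Lop q) (tens b 1) = My 'X^n (tens b 1).
Proof. by rewrite -Tm_iter Tm_n My_tens. Qed.

Lemma Lop_nt t b : iter (n * t) (Lop q) (tens b 1) = My 'X^(n * t) (tens b 1).
Proof.
elim: t => [|t IH]; first by rewrite muln0 expr0 My1.
rewrite mulnSr iterD Lop_n iterLop_My IH My_My -exprD.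
by [].
Qed.

Lemma Lop_key u k' b : q ^+ u = 1 ->
  iter u (Lop q) (iter k' (Lop q) (tens b 1)) = My 'X^u (iter k' (Lop q) (tens b 1)).
Proof.
move=> hu.
have hmod : (u %% n = 0)%N.
  apply/eqP; apply: contraT => h.
  have := hmin (u %% n); rewrite lt0n h ltn_mod hn0 /= => /(_ isT) /eqP H; exfalso; apply: H.
  by rewrite -hu {2}(divn_eq u n) exprD mulnC exprM hnq expr1n mul1r.
have hu' : u = (n * (u %/ n))%N by rewrite {1}(divn_eq u n) hmod addn0 mulnC.
rewrite -iterD addnC iterD hu' Lop_nt -hu' iterLop_My.
by [].
Qed.


Lemma My0H R : My (0 : {poly k}) R = 0.
Proof. by apply/polyP => j; rewrite coef_My mulr0 coef0. Qed.

Lemma Lp_H (H : {poly k}) : (forall u, H`_u != 0 -> q ^+ u = 1) -> forall k' b,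
  Lp q H (iter k' (Lop q) (tens b 1)) = My H (iter k' (Lop q) (tens b 1)).
Proof.
move=> hH k' b.
rewrite -{2}[H]coefK poly_def My_sumH /Lp; apply: eq_bigr => u _.
have := My_linH _ (H`_u) 'X^u 0 (iter k' (Lop q) (tens b 1)).
rewrite !addr0 My0H addr0 => ->.
have [->|hu] := eqVneq H`_u 0; first by rewrite polyC0 !scale0r.
by rewrite Lop_key // hH.
Qed.

Lemma Lp_mul (H : {poly k}) : (forall u, H`_u != 0 -> q ^+ u = 1) -> forall r k' b,
  Lp q (H * r) (iter k' (Lop q) (tens b 1)) = My H (Lp q r (iter k' (Lop q) (tens b 1))).
Proof.
move=> hH r; elim/poly_ind: r => [|p c IH] k' b.
  by rewrite mulr0 !Lp0 My0.
rewrite mulrDr mulrA [H * c%:P]mulrC mul_polyC LpD LpZ Lp_mulX.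
rewrite (IH k'.+1) (Lp_H _ hH) LpD Lp_mulX LpC.
have := My_lin _ H 1 (Lp q p (Lop q (iter k' (Lop q) (tens b 1)))) (c%:P *: iter k' (Lop q) (tens b 1)).
rewrite !scale1r => ->; congr (_ + _).
by have := My_lin _ H c (iter k' (Lop q) (tens b 1)) 0; rewrite !addr0 My0 addr0.
Qed.

Lemma tauq_H (H : {poly k}) : (forall u, H`_u != 0 -> q ^+ u = 1) -> forall r b,
  tauq q (tens (H * r) b) = My H (Lp q r (tens b 1)).
Proof. by move=> hH r b; rewrite Lp_tauq (Lp_mul _ hH r 0). Qed.

End Root.

Section Central.
Variable k : fieldType.
Variable q : k.
Hypothesis hq0 : q != 0.

Lemma theta_M (a b : {poly k}) : theta q (a * b) = theta q a * theta q b.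
Proof.
apply/polyP => j; rewrite coef_theta !coefM mulr_sumr; apply: eq_bigr => [[i hi]] _ /=.
rewrite !coef_theta.
have -> : q ^+ j = q ^+ i * q ^+ (j - i) by rewrite -exprD subnKC.
ring.
Qed.

Lemma theta1 : theta q 1 = 1.
Proof.
apply/polyP => j; rewrite coef_theta coef1; case: j => [|j] /=.
  by rewrite expr0 mul1r.
by rewrite mulr0.
Qed.

Lemma theta_prod m (F : 'I_m -> {poly k}) :
  theta q (\prod_(i < m) F i) = \prod_(i < m) theta q (F i).
Proof.
elim: m F => [|m IH] F; first by rewrite !big_ord0 theta1.
by rewrite !big_ord_recr theta_M IH.
Qed.

Lemma iter_theta_neq0 j (g : {poly k}) : g != 0 -> iter j (theta q) g != 0.
Proof.
move=> hg; apply/eqP => /polyP /(_ (size g).-1).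
rewrite coef_iter_theta coef0 => /eqP; rewrite mulf_eq0 expf_eq0 expf_eq0.
rewrite (negbTE hq0) !andbF /=.
by rewrite -lead_coefE lead_coef_eq0 (negbTE hg).
Qed.

Variable n : nat.
Hypothesis hn0 : (0 < n)%N.
Hypothesis hnq : q ^+ n = 1.

Definition central (g : {poly k}) := \prod_(j < n) iter j (theta q) g.

Lemma central_mul (g : {poly k}) : exists r, central g = g * r.
Proof.
move: hn0; rewrite /central; case: n => // n' _.
by rewrite big_ord_recl /=; eexists.
Qed.

Lemma central_neq0 (g : {poly k}) : g != 0 -> central g != 0.
Proof. by move=> hg; apply/prodf_neq0 => j _; apply: iter_theta_neq0. Qed.

Lemma central_theta (g : {poly k}) : theta q (central g) = central g.
Proof.
rewrite /central theta_prod.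
have hth : iter n (theta q) g = g.
  by apply/polyP => i; rewrite coef_iter_theta exprAC hnq expr1n mul1r.
move: hn0 hth; case: n => // n' _ hth.
rewrite big_ord_recr big_ord_recl /= -iterS hth mulrC; congr (_ * _).
Qed.

Lemma central_supp (g : {poly k}) u : (central g)`_u != 0 -> q ^+ u = 1.
Proof.
move=> hu; have := congr1 (fun p : {poly k} => p`_u) (central_theta g).
rewrite /= coef_theta => /eqP; rewrite -subr_eq0 -{2}[_`_u]mul1r -mulrBl mulf_eq0.
by rewrite (negbTE hu) orbF subr_eq0 => /eqP.
Qed.

End Central.

Section Topo.
Variable k : fieldType.

Lemma poly_trunc (p : {poly k}) N : (size p <= N)%N -> \poly_(i < N) p`_i = p.
Proof.
move=> h; apply/polyP => i; rewrite coef_poly; case: ltnP => // hi.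
by rewrite nth_default // (leq_trans h hi).
Qed.

Lemma fincodim_nz (I : {poly k} -> Prop) : fin_codim I -> exists g, g != 0 /\ I g.
Proof.
move=> [s hs]; set N := (\max_(i < size s) size (nth (0 : {poly k})%R s i))%N.
have [c hc] := hs 'X^N; eexists; split; last exact: hc.
apply/eqP => /polyP /(_ N); rewrite coefB coefXn eqxx coef_sum coef0.
rewrite big1 ?subr0; first by move/eqP; rewrite oner_eq0.
move=> i _.
rewrite coefZ nth_default ?mulr0 //.
exact: leq_bigmax.
Qed.

Lemma principal_open (G : {poly k}) : G != 0 ->
  cofinite_open (fun p => exists r, p = G * r).
Proof.
move=> hG.
have hI : is_ideal (fun p => exists r, p = G * r).
  split; first by exists 0; rewrite mulr0.
  split; first by move=> a b [r ->] [r' ->]; exists (r + r'); rewrite mulrDr.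
  split; first by move=> a b [r ->]; exists (a * r); rewrite mulrCA.
  by move=> a b [r ->]; exists (r * b); rewrite mulrA.
split.
  split; first by exists 0; rewrite mulr0.
  split; first by move=> a b [r ->] [r' ->]; exists (r + r'); rewrite mulrDr.
  by move=> c a [r ->]; exists (c *: r); rewrite scalerAr.
exists (fun p => exists r, p = G * r); split => //.
exists (mkseq (fun i => 'X^i) (size G)) => p.
exists (fun i => (p %% G)`_i); rewrite size_mkseq.
have -> : \sum_(i < size G) (p %% G)`_i *: (mkseq (fun i => 'X^i) (size G))`_i = p %% G.
  rewrite -[RHS](poly_trunc _ (size G)); last by apply: ltnW; rewrite ltn_modp.
  rewrite poly_def; apply: eq_bigr => i _; by rewrite nth_mkseq.
by exists (p %/ G); rewrite {1}(divp_eq p G) addrK mulrC.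
Qed.

Lemma V_sum (V : {poly {poly k}} -> Prop) (T : eqType) (s : seq T) (F : T -> {poly {poly k}}) :
  subspace2 V -> (forall e, e \in s -> V (F e)) -> V (\sum_(e <- s) F e).
Proof.
move=> [h0 [hD _]] hF; elim: s hF => [|x s IH] hF; first by rewrite big_nil.
rewrite big_cons; apply: hD; first by apply: hF; rewrite mem_head.
by apply: IH => e he; apply: hF; rewrite in_cons he orbT.
Qed.

Lemma V_sumo (V : {poly {poly k}} -> Prop) m (F : 'I_m -> {poly {poly k}}) :
  subspace2 V -> (forall i, V (F i)) -> V (\sum_(i < m) F i).
Proof. by move=> hV hF; apply: V_sum. Qed.

Lemma tens_sum_l (E0 F0 : {poly k} -> Prop) a b : E0 a -> tens_sum E0 F0 (tens a b).
Proof.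
move=> ha; exists [:: (a, b)], [::]; split.
- by move=> e; rewrite mem_seq1 => /eqP ->.
- by [].
- by rewrite big_seq1 big_nil addr0.
Qed.

Lemma tens_sum_r (E0 F0 : {poly k} -> Prop) a b : F0 b -> tens_sum E0 F0 (tens a b).
Proof.
move=> hb; exists [::], [:: (a, b)]; split.
- by [].
- by move=> e; rewrite mem_seq1 => /eqP ->.
- by rewrite big_seq1 big_nil add0r.
Qed.

Lemma My_expand (H : {poly k}) R :
  My H R = \sum_(j < size R) tens 'X^j (R`_j * H).
Proof.
apply/polyP => i; rewrite coef_My coef_sum.
under eq_bigr => j _ do rewrite coef_tens coefXn.
rewrite (sum_deltaP _ (size R) i (fun j => R`_j * H)).
by case: ltnP => // h; rewrite nth_default ?mul0r.
Qed.

Variable q : k.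
Hypothesis hq1 : q != 1.

Lemma theta_G (G f : {poly k}) : (forall u, G`_u != 0 -> q ^+ u = 1) ->
  theta q (G * f) = G * theta q f.
Proof.
move=> hG; rewrite theta_M; congr (_ * _).
apply/polyP => u; rewrite coef_theta.
by have [->|/hG ->] := eqVneq G`_u 0; rewrite ?mulr0 ?mul1r.
Qed.

Lemma dq_G (G f : {poly k}) : (forall u, G`_u != 0 -> q ^+ u = 1) ->
  dq q (G * f) = G * dq q f.
Proof.
move=> hG; apply/polyP => j; rewrite coef_dq !coefM big_ord_recr /= mulrDr.
have -> : qint q j.+1 * (G`_j.+1 * f`_(j.+1 - j.+1)) = 0.
  have [->|/hG h] := eqVneq G`_j.+1 0; first by rewrite !mul0r mulr0.
  by rewrite qint_eq0 // mul0r.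
rewrite addr0 mulr_sumr; apply: eq_bigr => [[l hl]] _ /=.
rewrite coef_dq subSn //.
have [->|/hG h] := eqVneq G`_l 0; first by rewrite !mul0r mulr0.
have -> : (j.+1 = l + (j - l).+1)%N by lia.
rewrite qintD qint_eq0 // h add0r mul1r; ring.
Qed.

Lemma iter_G (G f : {poly k}) i m : (forall u, G`_u != 0 -> q ^+ u = 1) ->
  iter i (theta q) (iter m (dq q) (G * f)) = G * iter i (theta q) (iter m (dq q) f).
Proof.
move=> hG.
have -> : iter m (dq q) (G * f) = G * iter m (dq q) f.
  by elim: m => //= m ->; rewrite dq_G.
by elim: i => //= i ->; rewrite theta_G.
Qed.

Lemma V_b (V : {poly {poly k}} -> Prop) (E0 F0 : {poly k} -> Prop) (G : {poly k}) :
  subspace2 V -> (forall P, tens_sum E0 F0 P -> V P) -> (forall r, E0 (G * r)) ->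
  (forall u, G`_u != 0 -> q ^+ u = 1) ->
  forall a r, V (tauq q (tens a (G * r))).
Proof.
move=> hV hP hE hG a r; rewrite tauqE; apply: V_sumo => // m.
apply: V_sumo => // i; apply: hP; apply: tens_sum_l.
by rewrite coef_tens scalerAr iter_G // scalerAr.
Qed.

Lemma V_My (V : {poly {poly k}} -> Prop) (E0 F0 : {poly k} -> Prop) (H : {poly k}) :
  subspace2 V -> (forall P, tens_sum E0 F0 P -> V P) -> (forall r, F0 (r * H)) ->
  forall R, V (My H R).
Proof.
move=> hV hP hF R; rewrite My_expand; apply: V_sumo => // j.
by apply: hP; apply: tens_sum_r.
Qed.

End Topo.

Lemma tauq00 (k : fieldType) (q : k) (g : {poly k}) d : (d < size g)%N ->
  (tauq q (tens g 'X^d))`_0`_0 = ff q 0 d * g`_d.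
Proof.
move=> hd; rewrite (tauq_bound _ q (size g)); last by apply: size_poly.
rewrite !coef_sum.
under eq_bigr => m _ do rewrite coef_Tm leq0n qbinom_m0 !expr0 subn0 add0n coef_tens coefZ coefXn mul1r.
transitivity (\sum_(i < size g) ff q 0 i * g`_i * (d == i)%:R).
  by apply: eq_bigr => i _; rewrite eq_sym mul1r !mulrA.
by rewrite (sum_delta _ (size g) d (fun m => ff q 0 m * g`_m)) hd.
Qed.


Theorem lemma5p1 (k : fieldType) (q : k) (hq0 : q != 0) (hq1 : q != 1) :
  tens_continuous (tauq q) <-> q_root_of_unity q.
Proof.
split.
- move=> hc.
  pose V := fun P : {poly {poly k}} => P`_0`_0 = 0.
  pose E := fun p : {poly k} => p`_0 = 0.
  have hI : is_ideal E.
    rewrite /E; split; first by rewrite coef0.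
    split; first by move=> a b ha hb; rewrite coefD ha hb addr0.
    split; first by move=> a b hb; rewrite coef0M hb mulr0.
    by move=> a b ha; rewrite coef0M ha mul0r.
  have hE : cofinite_open E.
    split.
      rewrite /E; split; first by rewrite coef0.
      split; first by move=> a b ha hb; rewrite coefD ha hb addr0.
      by move=> c a ha; rewrite coefZ ha mulr0.
    exists E; split => //.
    exists [:: 1] => p; exists (fun _ => p`_0).
    by rewrite /E big_ord1 /= coefB coefZ coef1 mulr1 subrr.
  have hV : tens_open V.
    split.
      rewrite /V; split; first by rewrite !coef0.
      split; first by move=> a b ha hb; rewrite !coefD ha hb addr0.
      by move=> c a ha; rewrite coef2Z ha mulr0.
    exists E, E; split => // P [s [t [hs ht ->]]].
    rewrite /V !(coefD, coef_sum) big1_seq ?add0r.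
      rewrite big1_seq // => e /andP[_ /ht]; rewrite /E coef2_tens => ->.
      by rewrite mulr0.
    by move=> e /andP[_ /hs]; rewrite /E coef2_tens => ->; rewrite mul0r.
  have [_ [E0 [F0 [[_ [I [hI' hIc hIE]]] _ hP]]]] := hc V hV.
  have [g [hg0 hg]] := fincodim_nz _ _ hIc.
  set d := (size g).-1.
  have hd : (d < size g)%N by rewrite /d ltn_predL size_poly_gt0.
  have := hP _ (tens_sum_l _ E0 F0 g 'X^d (hIE _ hg)).
  rewrite /V tauq00 // => /eqP; rewrite mulf_eq0.
  have -> : (g`_d == 0) = false.
    by apply/negbTE; rewrite /d -lead_coefE lead_coef_eq0.
  rewrite orbF /ff prodf_seq_eq0 => /hasP [l _ /= hl].
  exists l.+1; split => //.
  case: (eqVneq (q ^+ l.+1) 1) => // hne.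
  by move: (qint_neq0 _ _ _ hne); rewrite add0n in hl; rewrite hl.
- case=> n0 [hn00 hnq0] V [hVs [E0 [F0 [hE0 hF0 hP]]]].
  have exP : exists n, (0 < n)%N && (q ^+ n == 1).
    by exists n0; rewrite hn00 hnq0 eqxx.
  case: (ex_minnP exP) => n /andP [hn0 /eqP hnq] hmin.
  have hmin' : forall l, (0 < l < n)%N -> q ^+ l != 1.
    move=> l /andP [hl0 hln]; apply/negP => /eqP hl.
    by have := hmin l; rewrite hl0 hl eqxx => /(_ isT); rewrite leqNgt hln.
  case: hE0 => _ [I [hI hIc hIE]]; case: hF0 => _ [J [hJ hJc hJF]].
  have [g [hg0 hg]] := fincodim_nz _ _ hIc.
  have [h [hh0 hh]] := fincodim_nz _ _ hJc.
  pose G := central k q n g; pose H := central k q n h.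
  have hGs : forall u, G`_u != 0 -> q ^+ u = 1 := central_supp k q n hn0 hnq g.
  have hHs : forall u, H`_u != 0 -> q ^+ u = 1 := central_supp k q n hn0 hnq h.
  have hGE : forall r, E0 (G * r).
    move=> r; apply: hIE; rewrite /G; have [r0 ->] := central_mul k q n hn0 g.
    by case: hI => _ [_ [_ hIr]]; rewrite -mulrA; apply: hIr.
  have hHF : forall r, F0 (r * H).
    move=> r; apply: hJF; rewrite mulrC /H; have [r0 ->] := central_mul k q n hn0 h.
    by case: hJ => _ [_ [_ hJr]]; rewrite -mulrA; apply: hJr.
  split.
    case: hVs => h0 [hD hZ].
    split; first by rewrite tauq0.
    split; first by move=> a b ha hb; rewrite tauqD; apply: hD.
    by move=> c a ha; rewrite tauqZ; apply: hZ.
  exists (fun a => exists r, a = H * r), (fun b => exists r, b = G * r).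
  split.
  + by apply: principal_open; apply: central_neq0.
  + by apply: principal_open; apply: central_neq0.
  move=> P [s [t [hs ht ->]]].
  rewrite tauqD !tauq_sum; have := hVs; case=> h0 [hD hZ]; apply: hD.
    apply: V_sum => // e /hs [r ->].
    rewrite (tauq_H k q hq1 n hn0 hnq hmin' H hHs).
    exact: (V_My k V E0 F0 H hVs hP hHF).
  apply: V_sum => // e /ht [r ->].
  exact: (V_b k q hq1 V E0 F0 G hVs hP hGE hGs).
Qed.
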